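(* Let $U$ be an $r$-dimensional subspace of $\mathbb{R}^d$ with $\mu(U)\le\mu_0$, let $\tilde U$ be a subspace of $U$, and let $x_t\in U$. Let $\delta\in(0,1)$ and let $\Omega$ be a list of $m$ indices sampled independently and uniformly with replacement from $[d]$. (i) If $x_t\notin\tilde U$ and $m\ge 32r\mu_0\log^2(2r/\delta)$, then with probability at least $1-4\delta$, $\|x_{t\Omega}-\mathcal{P}_{\tilde U_\Omega}x_{t\Omega}\|_2>0$. (ii) If $x_t\in\tilde U$, then $\|x_{t\Omega}-\mathcal{P}_{\tilde U_\Omega}x_{t\Omega}\|_2=0$ whenever $\tilde U_\Omega^T\tilde U_\Omega$ is invertible.
   Context: For an $r$-dimensional subspace $U\subseteq\mathbb{R}^d$, $\mu(U)=\frac{d}{r}\max_{i\in[d]}\|\mathcal{P}_Ue_i\|_2^2$. For a list $\Omega\in[d]^m$ and $z\in\mathbb{R}^d$, $z_\Omega\in\mathbb{R}^m$ has $j$th entry $z(\Omega(j))$. For a subspace $\tilde U$ with orthonormal basis matrix (also denoted $\tilde U$), $\tilde U_\Omega$ is the matrix whose $j$th row is row $\Omega(j)$ of $\tilde U$, and $\mathcal{P}_{\tilde U_\Omega}$ is the orthogonal projection onto the column span of $\tilde U_\Omega$ (for $\tilde U=\{0\}$ this projection is $0$). *)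

(* Defs.v *)
From Stdlib Require Import Reals Lra List ClassicalEpsilon ClassicalDescription.
Open Scope R_scope.

Fixpoint sumR (n : nat) (f : nat -> R) : R :=
  match n with O => 0 | S n' => sumR n' f + f n' end.

(* Vectors of R^n are functions nat -> R (only indices < n matter);
   an n x k matrix is a function row -> column -> R. *)
Definition vec := nat -> R.
Definition mat := nat -> nat -> R.

Definition dot (n : nat) (x y : vec) : R := sumR n (fun i => x i * y i).
Definition norm2 (n : nat) (x : vec) : R := sqrt (dot n x x).
Definition col (A : mat) (j : nat) : vec := fun i => A i j.

Definition in_colspan (n k : nat) (A : mat) (y : vec) : Prop :=
  exists c : vec, forall i, (i < n)%nat -> y i = sumR k (fun j => A i j * c j).

Definition orthonormal_cols (n k : nat) (A : mat) : Prop :=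
  forall j1 j2, (j1 < k)%nat -> (j2 < k)%nat ->
    dot n (col A j1) (col A j2) = if Nat.eq_dec j1 j2 then 1 else 0.

Definition is_proj (n k : nat) (A : mat) (z p : vec) : Prop :=
  in_colspan n k A p /\
  forall j, (j < k)%nat -> dot n (col A j) (fun i => z i - p i) = 0.

(* The orthogonal projection P_{span A} z (exists and is unique on indices < n;
   for k = 0 it is 0). *)
Definition proj (n k : nat) (A : mat) (z : vec) : vec :=
  epsilon (inhabits (fun _ : nat => 0)) (fun p => is_proj n k A z p).

Definition std_basis (i : nat) : vec := fun l => if Nat.eq_dec l i then 1 else 0.

Fixpoint maxR (n : nat) (f : nat -> R) : R :=
  match n with O => 0 | S n' => Rmax (maxR n' f) (f n') end.

(* Coherence mu(U) = d/r * max_i ||P_U e_i||^2, U given by a d x r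
   orthonormal basis matrix. *)
Definition coherence (d r : nat) (U : mat) : R :=
  INR d / INR r * maxR d (fun i => (norm2 d (proj d r U (std_basis i))) ^ 2).

Definition sel (Om : list nat) (z : vec) : vec := fun j => z (nth j Om O).
Definition rows_sel (Om : list nat) (A : mat) : mat := fun j c => A (nth j Om O) c.

Definition gram (m k : nat) (B : mat) : mat := fun a b => dot m (col B a) (col B b).
Definition invertible (k : nat) (G : mat) : Prop :=
  exists H : mat, forall a b, (a < k)%nat -> (b < k)%nat ->
    sumR k (fun c => G a c * H c b) = (if Nat.eq_dec a b then 1 else 0) /\
    sumR k (fun c => H a c * G c b) = (if Nat.eq_dec a b then 1 else 0).

Fixpoint all_lists (d m : nat) : list (list nat) :=
  match m with
  | O => nil :: nil
  | S m' => flat_map (fun l => map (fun i => i :: l) (seq 0 d)) (all_lists d m')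
  end.

(* Probability of event E when Omega is m i.i.d. uniform draws from [d]
   (= uniform distribution on [d]^m). *)
Definition prob (d m : nat) (E : list nat -> Prop) : R :=
  fold_right (fun l acc => (if excluded_middle_informative (E l) then 1 else 0) + acc)
    0 (all_lists d m) / (INR d ^ m).

Definition residual (Om : list nat) (k : nat) (A : mat) (z : vec) : R :=
  let m := length Om in
  norm2 m (fun j => sel Om z j - proj m k (rows_sel Om A) (sel Om z) j).

(* Main.v *)
Require Import Defs.
From Stdlib Require Import Reals List Lra Lia Psatz ClassicalEpsilon ClassicalDescription FunctionalExtensionality ZArith.
Open Scope nat_scope.
Open Scope R_scope.

Lemma sumR_ext n f g : (forall i, (i < n)%nat -> f i = g i) -> sumR n f = sumR n g.
Proof. induction n; simpl; intros H; auto. rewrite IHn by (intros; apply H; lia). rewrite H by lia. auto. Qed.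

Lemma sumR_le n f g : (forall i, (i<n)%nat -> f i <= g i) -> sumR n f <= sumR n g.
Proof. induction n; simpl; intros H. lra. apply Rplus_le_compat. apply IHn; intros; apply H; lia. apply H; lia. Qed.

Lemma sumR_plus n f g : sumR n (fun i => f i + g i) = sumR n f + sumR n g.
Proof. induction n; simpl. lra. rewrite IHn. lra. Qed.

Lemma sumR_scal n c f : sumR n (fun i => c * f i) = c * sumR n f.
Proof. induction n; simpl. lra. rewrite IHn. lra. Qed.

Lemma sumR_minus n f g : sumR n (fun i => f i - g i) = sumR n f - sumR n g.
Proof. induction n; simpl. lra. rewrite IHn. lra. Qed.

Lemma sumR_const n c : sumR n (fun _ => c) = INR n * c.
Proof. induction n; simpl sumR. simpl; lra. rewrite IHn, S_INR. lra. Qed.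

Lemma sumR_zero n : sumR n (fun _ => 0) = 0.
Proof. rewrite sumR_const. lra. Qed.

Lemma sumR_swap n m f : sumR n (fun i => sumR m (fun j => f i j)) = sumR m (fun j => sumR n (fun i => f i j)).
Proof. induction n; simpl. rewrite sumR_zero. auto. rewrite IHn, <- sumR_plus. auto. Qed.

Lemma sumR_nonneg n f : (forall i, (i<n)%nat -> 0 <= f i) -> 0 <= sumR n f.
Proof. intros H. rewrite <- (sumR_zero n). apply sumR_le. auto. Qed.

Lemma sumR_term_le n f i : (forall j, (j<n)%nat -> 0 <= f j) -> (i < n)%nat -> f i <= sumR n f.
Proof. induction n; intros H Hi. lia. simpl. destruct (Nat.eq_dec i n).
 subst. assert (0 <= sumR n f) by (apply sumR_nonneg; intros; apply H; lia). lra.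
 assert (f i <= sumR n f) by (apply IHn; [intros; apply H; lia| lia]). assert (0 <= f n) by (apply H; lia). lra. Qed.

Lemma sumR_sq0 n f : sumR n (fun i => f i * f i) = 0 -> forall i, (i<n)%nat -> f i = 0.
Proof. intros H i Hi. assert (f i * f i <= sumR n (fun i => f i * f i)).
 apply (sumR_term_le n (fun i => f i * f i)); auto. intros; nra. nra. Qed.

Lemma delta_gen n a h : (a < n)%nat -> (forall j, (j<n)%nat -> j <> a -> h j = 0) -> sumR n h = h a.
Proof. induction n; intros Ha H. lia. simpl. destruct (Nat.eq_dec a n).
 subst. rewrite (sumR_ext n h (fun _ => 0)), sumR_zero. lra. intros; apply H; lia.
 rewrite IHn by (try lia; intros; apply H; lia). rewrite (H n) by lia. lra. Qed.

Lemma dot_comm n x y : dot n x y = dot n y x.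
Proof. unfold dot. apply sumR_ext. intros; ring. Qed.

Lemma dot_nonneg n x : 0 <= dot n x x.
Proof. unfold dot. apply sumR_nonneg. intros; nra. Qed.

Lemma dot_ext n x y x' y' : (forall i, (i<n)%nat -> x i = x' i) -> (forall i, (i<n)%nat -> y i = y' i) -> dot n x y = dot n x' y'.
Proof. intros. unfold dot. apply sumR_ext. intros. rewrite H, H0 by auto. auto. Qed.

Lemma dot_minus_r n x y z : dot n x (fun i => y i - z i) = dot n x y - dot n x z.
Proof. unfold dot. rewrite <- sumR_minus. apply sumR_ext; intros; ring. Qed.

Lemma dot_scal_l n c x y : dot n (fun i => c * x i) y = c * dot n x y.
Proof. unfold dot. rewrite <- sumR_scal. apply sumR_ext; intros; ring. Qed.

Lemma dot_scal_r n c x y : dot n x (fun i => c * y i) = c * dot n x y.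
Proof. unfold dot. rewrite <- sumR_scal. apply sumR_ext; intros; ring. Qed.

Lemma dot_sub_sq n a p : dot n (fun i => a i - p i) (fun i => a i - p i) = dot n a a - 2 * dot n a p + dot n p p.
Proof. unfold dot. rewrite <- sumR_scal, <- sumR_minus, <- sumR_plus. apply sumR_ext; intros; ring. Qed.

Definition ONf n s (F : nat -> vec) := forall t q, (t<s)%nat -> (q<s)%nat -> dot n (F t) (F q) = if Nat.eq_dec t q then 1 else 0.
Definition lc s (c : nat -> R) (F : nat -> vec) : vec := fun i => sumR s (fun t => c t * F t i).

Lemma dot_lc_r n s c F v : dot n v (lc s c F) = sumR s (fun t => c t * dot n v (F t)).
Proof. unfold dot, lc.
 rewrite (sumR_ext n _ (fun i => sumR s (fun t => c t * (v i * F t i)))).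
 rewrite sumR_swap. apply sumR_ext; intros. rewrite <- sumR_scal. auto.
 intros. rewrite <- sumR_scal. apply sumR_ext; intros; ring. Qed.

Lemma dot_lc_l n s c F v : dot n (lc s c F) v = sumR s (fun t => c t * dot n (F t) v).
Proof. rewrite dot_comm, dot_lc_r. apply sumR_ext; intros. rewrite dot_comm; auto. Qed.

Lemma dot_lc_ON n s c c' F : ONf n s F -> dot n (lc s c F) (lc s c' F) = sumR s (fun t => c t * c' t).
Proof. intros H. rewrite dot_lc_l. apply sumR_ext; intros t Ht. f_equal.
 rewrite dot_lc_r. rewrite (delta_gen s t (fun q => c' q * dot n (F t) (F q))); auto.
 rewrite H by auto. destruct (Nat.eq_dec t t); try lia; ring.
 intros. rewrite H by auto. destruct (Nat.eq_dec t j); try lia; ring. Qed.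

Lemma dot_F_lc n s c F q : ONf n s F -> (q < s)%nat -> dot n (F q) (lc s c F) = c q.
Proof. intros H Hq. rewrite dot_lc_r. rewrite (delta_gen s q); auto.
 rewrite H by auto. destruct (Nat.eq_dec q q); try lia; ring.
 intros. rewrite H by auto. destruct (Nat.eq_dec q j); try lia; ring. Qed.

Lemma bessel n s F a : ONf n s F -> sumR s (fun t => dot n a (F t) * dot n a (F t)) <= dot n a a.
Proof. intros H. set (c := fun t => dot n a (F t)). set (p := lc s c F).
 assert (H1 := dot_nonneg n (fun i => a i - p i)). rewrite dot_sub_sq in H1.
 assert (dot n a p = sumR s (fun t => c t * c t)). unfold p. rewrite dot_lc_r. apply sumR_ext; intros. unfold c. ring.
 assert (dot n p p = sumR s (fun t => c t * c t)). unfold p. apply dot_lc_ON; auto.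
 unfold c in *. lra. Qed.

Lemma dot_std n i v : (i < n)%nat -> dot n (std_basis i) v = v i.
Proof. intros. unfold dot, std_basis. rewrite (delta_gen n i); auto.
 destruct (Nat.eq_dec i i); try lia; ring. intros. destruct (Nat.eq_dec j i); try lia; ring. Qed.

Lemma ON_size n s F : ONf n s F -> (s <= n)%nat.
Proof. intros H. apply INR_le.
 assert (INR s = sumR s (fun t => sumR n (fun i => F t i * F t i))).
 rewrite <- (Rmult_1_r (INR s)), <- sumR_const. apply sumR_ext; intros.
 change (1 = dot n (F i) (F i)). rewrite H by auto. destruct (Nat.eq_dec i i); lia || auto.
 rewrite H0, sumR_swap. rewrite <- (Rmult_1_r (INR n)), <- sumR_const. apply sumR_le. intros i Hi.
 rewrite (sumR_ext s _ (fun t => dot n (std_basis i) (F t) * dot n (std_basis i) (F t))).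
 eapply Rle_trans. apply bessel; eauto. rewrite dot_std by auto. unfold std_basis. destruct (Nat.eq_dec i i); lia || lra.
 intros. rewrite dot_std; auto. Qed.
Definition subsp (X : vec -> Prop) := X (fun _ => 0) /\ forall c a b, X a -> X b -> X (fun i => c * a i + b i).

Lemma subsp_scal X c a : subsp X -> X a -> X (fun i => c * a i).
Proof. intros [H0 H1] Ha. replace (fun i => c * a i) with (fun i => c * a i + 0). apply H1; auto.
 apply functional_extensionality; intros; ring. Qed.

Lemma subsp_sub X a b : subsp X -> X a -> X b -> X (fun i => a i - b i).
Proof. intros [H0 H1] Ha Hb. replace (fun i => a i - b i) with (fun i => (-1) * b i + a i). apply H1; auto.
 apply functional_extensionality; intros; ring. Qed.

Lemma subsp_lc X s c F : subsp X -> (forall t, (t<s)%nat -> X (F t)) -> X (lc s c F).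
Proof. intros HX HF. induction s. apply HX. 
 replace (lc (S s) c F) with (fun i => c s * F s i + lc s c F i). apply HX. apply HF; lia. apply IHs; intros; apply HF; lia.
 apply functional_extensionality; intros; unfold lc; simpl; ring. Qed.

Definition Pfam n X s := exists F, ONf n s F /\ forall t, (t<s)%nat -> X (F t).
Fixpoint best (P : nat -> Prop) k := match k with O => O | S k' => if excluded_middle_informative (P (S k')) then S k' else best P k' end.
Definition dimX n X := best (Pfam n X) n.

Lemma best_spec P k : P O -> P (best P k).
Proof. induction k; simpl; auto. destruct excluded_middle_informative; auto. Qed.
Lemma best_max P k j : (j <= k)%nat -> P j -> (j <= best P k)%nat.
Proof. induction k; simpl; intros. lia. destruct excluded_middle_informative. lia.
 destruct (Nat.eq_dec j (S k)). subst; contradiction. apply IHk; auto; lia. Qed.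
Lemma best_le P k : (best P k <= k)%nat.
Proof. induction k; simpl. lia. destruct excluded_middle_informative; lia. Qed.

Lemma Pfam0 n X : Pfam n X 0.
Proof. exists (fun _ _ => 0). split. intros t q Ht; lia. intros; lia. Qed.
Lemma dim_spec n X : Pfam n X (dimX n X).
Proof. unfold dimX. apply best_spec, Pfam0. Qed.
Lemma dim_max n X j : Pfam n X j -> (j <= dimX n X)%nat.
Proof. intros H. unfold dimX. apply best_max; auto. destruct H as [F [HF _]]. eapply ON_size; eauto. Qed.

Lemma span_lemma n X s F a : subsp X -> ONf n s F -> (forall t, (t<s)%nat -> X (F t)) ->
  (forall j, Pfam n X j -> (j <= s)%nat) -> X a ->
  forall i, (i<n)%nat -> a i = lc s (fun t => dot n a (F t)) F i.
Proof. intros HX HF HFX Hmax Ha.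
 set (c := fun t => dot n a (F t)). set (p := lc s c F). set (b := fun i => a i - p i).
 assert (Xb : X b) by (apply subsp_sub; auto; apply subsp_lc; auto).
 assert (orth : forall q, (q<s)%nat -> dot n (F q) b = 0).
 { intros q Hq. unfold b. rewrite dot_minus_r. unfold p. rewrite dot_F_lc by auto. unfold c. rewrite dot_comm. ring. }
 destruct (Req_dec (dot n b b) 0) as [Hb|Hb].
 - intros i Hi. assert (b i = 0) by (apply (sumR_sq0 n b); auto). unfold b in H. fold c. fold p. lra.
 - exfalso. assert (Hpos : 0 < dot n b b) by (pose proof (dot_nonneg n b); lra).
   set (v := fun i => / sqrt (dot n b b) * b i).
   set (F' := fun t => if Nat.eq_dec t s then v else F t).
   assert (Pfam n X (S s)).
   { exists F'. split.
     - intros t q Ht Hq. unfold F'. destruct (Nat.eq_dec t s), (Nat.eq_dec q s).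
       + subst. destruct (Nat.eq_dec s s); try lia. unfold v. rewrite dot_scal_l, dot_scal_r.
         pose proof (sqrt_sqrt _ (Rlt_le _ _ Hpos)). pose proof (sqrt_lt_R0 _ Hpos). set (q := sqrt (dot n b b)) in *.
         rewrite <- H. field. lra.
       + destruct (Nat.eq_dec t q); try lia. unfold v. rewrite dot_scal_l, (dot_comm n b (F q)), orth by lia. ring.
       + destruct (Nat.eq_dec t q); try lia. unfold v. rewrite dot_scal_r, orth by lia. ring.
       + apply HF; lia.
     - intros t Ht. unfold F'. destruct (Nat.eq_dec t s). unfold v. apply subsp_scal; auto. apply HFX; lia. }
   apply Hmax in H. lia. Qed.

Lemma dim0_zero n X a : subsp X -> dimX n X = 0%nat -> X a -> forall i, (i<n)%nat -> a i = 0.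
Proof. intros HX H0 Ha i Hi. rewrite (span_lemma n X 0 (fun _ _ => 0) a HX); auto.
 intros t q Ht; lia. intros; lia. intros j Hj. rewrite <- H0. apply dim_max; auto. Qed.

Lemma colspan_subsp n k B : subsp (in_colspan n k B).
Proof. split. exists (fun _ => 0). intros. rewrite (sumR_ext k _ (fun _ => 0)), sumR_zero; auto. intros; ring.
 intros c a b [ca Ha] [cb Hb]. exists (fun j => c * ca j + cb j). intros i Hi. rewrite Ha, Hb by auto.
 rewrite <- sumR_scal, <- sumR_plus. apply sumR_ext; intros; ring. Qed.

Lemma col_in n k B j : (j < k)%nat -> in_colspan n k B (col B j).
Proof. intros Hj. exists (fun q => if Nat.eq_dec q j then 1 else 0). intros i Hi.
 rewrite (delta_gen k j); auto. destruct (Nat.eq_dec j j); try lia. unfold col; ring.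
 intros q Hq Hne. destruct (Nat.eq_dec q j); try lia. ring. Qed.

Lemma proj_spec n k B z : is_proj n k B z (proj n k B z).
Proof. unfold proj. apply epsilon_spec.
 set (X := in_colspan n k B). destruct (dim_spec n X) as [F [HF HFX]].
 set (s := dimX n X) in *.
 exists (lc s (fun t => dot n z (F t)) F). split.
 - apply subsp_lc; auto. apply colspan_subsp.
 - intros j Hj. assert (Hc : forall i, (i<n)%nat -> col B j i = lc s (fun t => dot n (col B j) (F t)) F i).
   { apply span_lemma with X; auto. apply colspan_subsp. intros; apply dim_max; auto. apply col_in; auto. }
   rewrite (dot_ext n _ _ (lc s (fun t => dot n (col B j) (F t)) F) (fun i => z i - lc s (fun t => dot n z (F t)) F i)); auto.
   rewrite dot_lc_l. rewrite (sumR_ext s _ (fun _ => 0)). apply sumR_zero.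
   intros t Ht. rewrite dot_minus_r, dot_F_lc by auto. rewrite (dot_comm n (F t) z). ring. Qed.

Lemma proj_fix n k B z : in_colspan n k B z -> forall i, (i<n)%nat -> proj n k B z i = z i.
Proof. intros [cz Hz]. destruct (proj_spec n k B z) as [[cp Hp] Hort].
 set (p := proj n k B z) in *. set (w := fun i => z i - p i).
 assert (dot n w w = 0).
 { transitivity (sumR n (fun i => sumR k (fun q => (cz q - cp q) * (B i q * w i)))).
   unfold dot. apply sumR_ext. intros i Hi.
   rewrite (sumR_ext k _ (fun q => w i * (B i q * cz q - B i q * cp q))) by (intros; ring).
   rewrite sumR_scal, sumR_minus, <- Hz, <- Hp by auto. unfold w. ring.
   rewrite sumR_swap. rewrite (sumR_ext k _ (fun _ => 0)). apply sumR_zero.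
   intros q Hq. rewrite sumR_scal. change (sumR n (fun i => B i q * w i)) with (dot n (col B q) w).
   rewrite Hort by auto. ring. }
 intros i Hi. assert (w i = 0) by (apply (sumR_sq0 n w); auto). unfold w in H0. lra. Qed.
Definition Wl (L : list (list nat)) (f : list nat -> R) : R := fold_right (fun l acc => f l + acc) 0 L.
Definition W d n f := Wl (all_lists d n) f.

Lemma Wl_app L1 L2 f : Wl (L1 ++ L2) f = Wl L1 f + Wl L2 f.
Proof. induction L1; simpl. lra. unfold Wl in *. simpl. rewrite IHL1. lra. Qed.

Lemma Wl_flat_map {A} (h : A -> list (list nat)) L f : Wl (flat_map h L) f = fold_right (fun a acc => Wl (h a) f + acc) 0 L.
Proof. induction L; simpl. auto. rewrite Wl_app, IHL. auto. Qed.

Lemma Wl_seq d l f : Wl (map (fun i => i :: l) (seq 0 d)) f = sumR d (fun i => f (i :: l)).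
Proof. induction d. auto. rewrite seq_S, map_app, Wl_app, IHd. simpl. unfold Wl; simpl. lra. Qed.

Lemma W_S d n f : W d (S n) f = W d n (fun l => sumR d (fun i => f (i :: l))).
Proof. unfold W. simpl. rewrite Wl_flat_map. unfold Wl at 2. induction (all_lists d n); simpl; auto.
 rewrite IHl, Wl_seq. auto. Qed.

Lemma W_0 d f : W d 0 f = f nil.
Proof. unfold W, Wl. simpl. ring. Qed.

Lemma Wl_ext L f g : (forall l, f l = g l) -> Wl L f = Wl L g.
Proof. intros H. induction L; simpl; auto. unfold Wl in *; simpl. rewrite IHL, H. auto. Qed.
Lemma W_ext d n f g : (forall l, f l = g l) -> W d n f = W d n g.
Proof. apply Wl_ext. Qed.

Lemma Wl_lin L c f h : Wl L (fun l => c * f l + h l) = c * Wl L f + Wl L h.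
Proof. induction L; unfold Wl in *; simpl. ring. rewrite IHL. ring. Qed.
Lemma W_lin d n c f h : W d n (fun l => c * f l + h l) = c * W d n f + W d n h.
Proof. apply Wl_lin. Qed.

Lemma W_le d n f g : (forall l, Forall (fun i => (i < d)%nat) l -> f l <= g l) -> W d n f <= W d n g.
Proof. revert f g. induction n; intros f g H. rewrite !W_0. apply H. constructor.
 rewrite !W_S. apply IHn. intros l Hl. apply sumR_le. intros i Hi. apply H. constructor; auto. Qed.

Lemma W_const d n c : W d n (fun _ => c) = INR d ^ n * c.
Proof. revert c. induction n; intros c. rewrite W_0. simpl. ring.
 rewrite W_S. rewrite (W_ext d n _ (fun _ => INR d * c)). rewrite IHn. simpl. ring.
 intros. apply sumR_const. Qed.

Lemma W_app d a b f : W d (a + b) f = W d b (fun lb => W d a (fun la => f (la ++ lb))).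
Proof. revert f. induction a; intros f. simpl. apply W_ext. intros. rewrite W_0. auto.
 simpl plus. rewrite W_S, IHa. apply W_ext. intros lb. rewrite W_S. apply W_ext. intros la. auto. Qed.

Definition ind (P : Prop) : R := if excluded_middle_informative P then 1 else 0.
Lemma ind_range P : 0 <= ind P <= 1.
Proof. unfold ind. destruct excluded_middle_informative; lra. Qed.

Fixpoint Bsum (b : nat -> nat) s := match s with O => O | S s' => (Bsum b s' + b (S s'))%nat end.

Section Phase.
Variable d : nat.
Variable g : list nat -> nat.
Variable beta : nat -> R.
Variable b : nat -> nat.
Hypothesis gmono : forall i l, (g (i :: l) <= g l)%nat.
Hypothesis gstep : forall l s, (1 <= s)%nat -> g l = s -> sumR d (fun i => ind (s <= g (i :: l))%nat) <= beta s * INR d.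
Hypothesis bpos : forall s, 0 <= beta s.

Lemma gmono_app l l0 : (g (l ++ l0) <= g l0)%nat.
Proof. induction l; simpl. lia. specialize (gmono a (l ++ l0)). lia. Qed.

Lemma Elemma s l0 : (1 <= s)%nat -> (g l0 <= s)%nat -> forall k, W d k (fun lb => ind (s <= g (lb ++ l0))%nat) <= (beta s * INR d) ^ k.
Proof. intros Hs Hl0 k. assert (Hbd : 0 <= beta s * INR d) by (apply Rmult_le_pos; auto; apply pos_INR).
 induction k. rewrite W_0. simpl. apply ind_range.
 rewrite W_S. eapply Rle_trans.
 apply (W_le d k _ (fun l => beta s * INR d * ind (s <= g (l ++ l0))%nat + 0)).
 intros l _. unfold ind at 2. destruct excluded_middle_informative as [H|H].
 - rewrite Rmult_1_r, Rplus_0_r.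
   rewrite (sumR_ext d _ (fun i => ind (s <= g (i :: (l ++ l0)))%nat)) by auto. apply gstep; auto. pose proof (gmono_app l l0). lia.
 - rewrite (sumR_ext d _ (fun _ => 0)). rewrite sumR_zero. lra.
   intros i Hi. unfold ind. destruct excluded_middle_informative as [H'|H']; auto.
   exfalso. apply H. simpl in H'. pose proof (gmono i (l ++ l0)). lia.
 - rewrite W_lin, W_const. simpl. rewrite Rmult_0_r, Rplus_0_r. apply Rmult_le_compat_l; auto. Qed.

Lemma phase s : forall l0, (g l0 <= s)%nat -> forall n, (Bsum b s <= n)%nat ->
  W d n (fun l => ind (1 <= g (l ++ l0))%nat) <= INR d ^ n * sumR s (fun t => beta (S t) ^ b (S t)).
Proof. induction s; intros l0 Hl0 n Hn.
 - simpl. rewrite (W_ext d n _ (fun _ => 0)). rewrite W_const. lra.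
   intros l. unfold ind. destruct excluded_middle_informative; auto. pose proof (gmono_app l l0). lia.
 - simpl in Hn. set (bb := b (S s)) in *. 
   replace n with ((n - bb) + bb)%nat by lia. set (a := (n - bb)%nat).
   assert (Ha : (Bsum b s <= a)%nat) by lia.
   assert (HS : 0 <= sumR s (fun t => beta (S t) ^ b (S t))) by (apply sumR_nonneg; intros; apply pow_le; auto).
   set (Sg := sumR s (fun t => beta (S t) ^ b (S t))) in *.
   rewrite W_app. eapply Rle_trans.
   apply (W_le d bb _ (fun lb => INR d ^ a * ind (S s <= g (lb ++ l0))%nat + INR d ^ a * Sg)).
   { intros lb _. unfold ind at 2. destruct excluded_middle_informative as [H|H].
     - eapply Rle_trans. apply (W_le d a _ (fun _ => 1)). intros; apply ind_range. rewrite W_const.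
       assert (0 <= INR d ^ a) by (apply pow_le, pos_INR). nra.
     - rewrite (W_ext d a _ (fun la => ind (1 <= g (la ++ (lb ++ l0)))%nat)).
       rewrite Rmult_0_r, Rplus_0_l. apply IHs; auto. lia.
       intros la. rewrite app_assoc. auto. }
   rewrite W_lin, W_const. eapply Rle_trans. apply Rplus_le_compat_r. apply Rmult_le_compat_l. apply pow_le, pos_INR.
   apply Elemma; auto. lia. simpl sumR. fold Sg. rewrite Rpow_mult_distr, pow_add. 
   assert (0 <= INR d ^ a) by (apply pow_le, pos_INR). apply Req_le. unfold bb. ring. Qed.
End Phase.
Definition uU (U : mat) (i : nat) : vec := fun j => U i j.
Definition Xl (r : nat) (U : mat) (l : list nat) : vec -> Prop := fun a => forall i, In i l -> dot r (uU U i) a = 0.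
Definition gU r U l := dimX r (Xl r U l).

Lemma Xl_subsp r U l : subsp (Xl r U l).
Proof. split. intros i _. unfold dot. rewrite (sumR_ext r _ (fun _ => 0)). apply sumR_zero. intros; ring.
 intros c a b Ha Hb i Hi. specialize (Ha i Hi). specialize (Hb i Hi). unfold dot in *. rewrite (sumR_ext r _ (fun j => c * (uU U i j * a j) + uU U i j * b j)).
 rewrite sumR_plus, sumR_scal, Ha, Hb. ring. intros; ring. Qed.

Lemma Xl_cons r U i l a : Xl r U (i :: l) a -> Xl r U l a.
Proof. intros H j Hj. apply H. right; auto. Qed.

Lemma gU_mono r U i l : (gU r U (i :: l) <= gU r U l)%nat.
Proof. unfold gU. destruct (dim_spec r (Xl r U (i :: l))) as [F [HF HFX]]. apply dim_max.
 exists F. split; auto. intros t Ht. apply Xl_cons with i. auto. Qed.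

Lemma lc_U r U a i : lc r a (col U) i = dot r (uU U i) a.
Proof. unfold lc, dot, uU, col. apply sumR_ext; intros; ring. Qed.

Lemma gU_step d r U K l s : ONf d r (col U) -> 0 < K -> (forall i, (i < d)%nat -> dot r (uU U i) (uU U i) <= K) ->
  (1 <= s)%nat -> gU r U l = s -> sumR d (fun i => ind (s <= gU r U (i :: l))%nat) <= INR d - INR s / K.
Proof. intros HU HK Hw Hs Hg.
 destruct (dim_spec r (Xl r U l)) as [F [HF HFX]]. fold (gU r U l) in HF, HFX. rewrite Hg in HF, HFX.
 set (S0 := sumR d (fun i => ind (s <= gU r U (i :: l))%nat)).
 assert (Key : INR s <= K * (INR d - S0)).
 { assert (E1 : INR s = sumR s (fun t => dot r (F t) (F t))).
   { rewrite <- (Rmult_1_r (INR s)), <- sumR_const. apply sumR_ext; intros.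
     rewrite HF by auto. destruct (Nat.eq_dec i i); lia || auto. }
   assert (E2 : forall t, dot r (F t) (F t) = sumR d (fun i => dot r (uU U i) (F t) * dot r (uU U i) (F t))).
   { intros t. transitivity (dot d (lc r (F t) (col U)) (lc r (F t) (col U))).
     rewrite dot_lc_ON by auto. reflexivity. unfold dot at 1. apply sumR_ext. intros; rewrite !lc_U. auto. }
   rewrite E1. rewrite (sumR_ext s _ _ (fun t _ => E2 t)). rewrite sumR_swap.
   rewrite <- (Rmult_1_r (INR d)), <- sumR_const. unfold S0. rewrite <- sumR_minus, <- sumR_scal.
   apply sumR_le. intros i Hi. unfold ind. destruct excluded_middle_informative as [H|H].
   - rewrite (sumR_ext s _ (fun _ => 0)). rewrite sumR_zero. lra.
     intros t Ht. assert (Hgi : gU r U (i :: l) = s) by (pose proof (gU_mono r U i l); lia).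
     destruct (dim_spec r (Xl r U (i :: l))) as [F' [HF' HF'X]]. fold (gU r U (i :: l)) in HF', HF'X. rewrite Hgi in HF', HF'X.
     assert (Hsp := span_lemma r (Xl r U l) s F' (F t) (Xl_subsp r U l) HF').
     rewrite (dot_ext r (uU U i) (F t) (uU U i) (lc s (fun q => dot r (F t) (F' q)) F')); auto.
     rewrite dot_lc_r. rewrite (sumR_ext s _ (fun _ => 0)). rewrite sumR_zero. ring.
     intros q Hq. rewrite (HF'X q Hq i (or_introl eq_refl)). ring.
     intros ? ?. apply Hsp; auto. intros q Hq. apply Xl_cons with i; auto.
     intros ? ?. rewrite <- Hg. apply dim_max; auto.
   - eapply Rle_trans. apply bessel; eauto. rewrite Rminus_0_r, Rmult_1_r. apply Hw; auto. }
 assert (INR s * / K <= K * (INR d - S0) * / K) by (apply Rmult_le_compat_r; auto; left; apply Rinv_0_lt_compat; auto).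
 replace (K * (INR d - S0) * / K) with (INR d - S0) in H by (field; lra). unfold Rdiv. lra. Qed.
Lemma ln_le' x y : 0 < x -> x <= y -> ln x <= ln y.
Proof. intros. destruct (Rle_lt_or_eq_dec _ _ H0). left; apply ln_increasing; auto. subst; lra. Qed.
Lemma exp_le' x y : x <= y -> exp x <= exp y.
Proof. intros. destruct (Rle_lt_or_eq_dec _ _ H). left; apply exp_increasing; auto. subst; lra. Qed.

Lemma exp_pow' a n : exp a ^ n = exp (a * INR n).
Proof. induction n. simpl. rewrite Rmult_0_r, exp_0. auto. simpl pow. rewrite IHn, S_INR, <- exp_plus. f_equal. ring. Qed.

Lemma ln_nonneg n : (1 <= n)%nat -> 0 <= ln (INR n).
Proof. intros. rewrite <- ln_1. apply ln_le'. lra. apply (le_INR 1); auto. Qed.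

Lemma harm n : (1 <= n)%nat -> sumR n (fun t => / INR (S t)) <= 1 + ln (INR n).
Proof. induction n; intros Hn. lia. destruct (Nat.eq_dec n 0). subst. simpl. rewrite ln_1. lra.
 change (sumR (S n) (fun t => / INR (S t))) with (sumR n (fun t => / INR (S t)) + / INR (S n)). assert (IH := IHn ltac:(lia)).
 assert (Hn0 : 0 < INR n) by (apply lt_0_INR; lia). rewrite S_INR.
 assert (H1 : ln (INR n) - ln (INR n + 1) <= - / (INR n + 1)).
 { assert (INR n / (INR n + 1) <= exp (- / (INR n + 1))).
   { pose proof (exp_ineq1_le (- / (INR n + 1))). replace (INR n / (INR n + 1)) with (1 + - / (INR n + 1)) by (field; lra). lra. }
   apply ln_le' in H. rewrite ln_exp in H. unfold Rdiv in H. rewrite ln_mult, ln_Rinv in H; try lra.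
   apply Rinv_0_lt_compat; lra. apply Rdiv_lt_0_compat; lra. }
 lra. Qed.

Definition Lc r delta := ln (2 * INR r / delta).
Definition bfun mu0 r delta (s : nat) := Z.to_nat (up (mu0 * INR r * Lc r delta / INR s)).
Definition betaf mu0 r (s : nat) := Rmax 0 (1 - INR s / (mu0 * INR r)).

Lemma INR_Bsum b s : INR (Bsum b s) = sumR s (fun t => INR (b (S t))).
Proof. induction s; simpl. auto. rewrite plus_INR, IHs. auto. Qed.

Lemma numeric r mu0 delta m : (1 <= r)%nat -> 0 < delta < 1 -> 1 <= mu0 ->
  32 * INR r * mu0 * (ln (2 * INR r / delta)) ^ 2 <= INR m ->
  (Bsum (bfun mu0 r delta) r <= m)%nat /\ sumR r (fun t => betaf mu0 r (S t) ^ bfun mu0 r delta (S t)) <= delta / 2.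
Proof. intros Hr Hd Hmu Hm. fold (Lc r delta) in Hm. set (L := Lc r delta) in *.
 assert (Hr0 : 0 < INR r) by (apply lt_0_INR; lia).
 assert (HA := ln_nonneg r Hr).
 assert (HL : ln 2 + ln (INR r) < L).
 { unfold L, Lc. rewrite <- ln_mult by lra. apply ln_increasing. lra.
   apply Rmult_lt_reg_r with delta. lra. replace (2 * INR r / delta * delta) with (2 * INR r) by (field; lra). nra. }
 pose proof ln_lt_2.
 assert (Hb : forall s, (1 <= s)%nat -> mu0 * INR r * L / INR s < INR (bfun mu0 r delta s) <= mu0 * INR r * L / INR s + 1).
 { intros s Hs. assert (0 < INR s) by (apply lt_0_INR; lia).
   assert (0 < mu0 * INR r * L / INR s) by (apply Rdiv_lt_0_compat; auto; apply Rmult_lt_0_compat; nra).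
   unfold bfun. fold L. destruct (archimed (mu0 * INR r * L / INR s)) as [Ha1 Ha2].
   rewrite (INR_IZR_INZ (Z.to_nat _)), Z2Nat.id. lra. apply Z.lt_le_incl, lt_0_IZR. lra. }
 split.
 - apply INR_le. rewrite INR_Bsum. eapply Rle_trans.
   apply (sumR_le r _ (fun t => mu0 * INR r * L * / INR (S t) + 1)). intros t Ht. apply Hb. lia.
   rewrite sumR_plus, sumR_scal, sumR_const. eapply Rle_trans. 2: apply Hm.
   pose proof (harm r Hr). assert (0 < mu0 * INR r * L) by (apply Rmult_lt_0_compat; nra).
   assert (mu0 * INR r * L * sumR r (fun t => / INR (S t)) <= mu0 * INR r * L * (1 + ln (INR r))) by (apply Rmult_le_compat_l; lra).
   assert (mu0 * L * (1 + ln (INR r)) + 1 <= 32 * mu0 * L ^ 2).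
   { assert (0 <= mu0 * L * (L - ln (INR r) - 1/2)) by (apply Rmult_le_pos; nra).
     assert (1/2 < mu0 * L) by nra. assert (0 <= mu0 * L * ln (INR r)) by (apply Rmult_le_pos; nra).
     replace (L ^ 2) with (L * L) by ring. nra. }
   nra.
 - eapply Rle_trans. apply (sumR_le r _ (fun _ => delta / (2 * INR r))).
   + intros t Ht. assert (Hs : (1 <= S t)%nat) by lia. specialize (Hb (S t) Hs).
     assert (0 < INR (S t)) by (apply lt_0_INR; lia).
     set (y := INR (S t) / (mu0 * INR r)).
     assert (0 < y) by (apply Rdiv_lt_0_compat; nra).
     eapply Rle_trans. apply (pow_incr _ (exp (- y))). split. apply Rmax_l. apply Rmax_lub. left; apply exp_pos.
     pose proof (exp_ineq1_le (- y)). unfold y in H2 |- *. lra.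
     rewrite exp_pow'. replace (delta / (2 * INR r)) with (exp (- L)).
     apply exp_le'. assert (L <= y * INR (bfun mu0 r delta (S t))).
     { apply Rle_trans with (y * (mu0 * INR r * L / INR (S t))). unfold y. right. field. split; lra.
       apply Rmult_le_compat_l; lra. }
     lra.
     rewrite exp_Ropp. unfold L, Lc. rewrite exp_ln. field. split; lra. apply Rdiv_lt_0_compat; lra.
   + rewrite sumR_const. right. field. lra. Qed.
Lemma maxR_ge n f i : (i < n)%nat -> f i <= maxR n f.
Proof. induction n; intros Hi. lia. simpl. destruct (Nat.eq_dec i n). subst. apply Rmax_r.
 eapply Rle_trans. apply IHn; lia. apply Rmax_l. Qed.

Lemma proj_U_norm d r U i : ONf d r (col U) -> (i < d)%nat ->
  norm2 d (proj d r U (std_basis i)) ^ 2 = dot r (uU U i) (uU U i).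
Proof. intros HU Hi. destruct (proj_spec d r U (std_basis i)) as [[c Hc] Hort].
 set (p := proj d r U (std_basis i)) in *.
 assert (Hp : forall l, (l < d)%nat -> p l = lc r c (col U) l).
 { intros l Hl. rewrite Hc by auto. unfold lc, col. apply sumR_ext; intros; ring. }
 assert (Hcj : forall j, (j < r)%nat -> c j = U i j).
 { intros j Hj. specialize (Hort j Hj). rewrite dot_minus_r in Hort.
   rewrite (dot_comm d (col U j) (std_basis i)), dot_std in Hort by auto.
   rewrite (dot_ext d (col U j) p (col U j) (lc r c (col U))) in Hort by auto.
   rewrite dot_F_lc in Hort by auto. unfold col in Hort. lra. }
 unfold norm2. rewrite pow2_sqrt by apply dot_nonneg.
 rewrite (dot_ext d p p (lc r c (col U)) (lc r c (col U))) by auto. rewrite dot_lc_ON by auto.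
 unfold dot, uU. apply sumR_ext. intros. rewrite Hcj; auto. Qed.

Lemma sum_w d r U : ONf d r (col U) -> sumR d (fun i => dot r (uU U i) (uU U i)) = INR r.
Proof. intros HU. unfold dot at 1. rewrite sumR_swap.
 rewrite <- (Rmult_1_r (INR r)), <- sumR_const. apply sumR_ext. intros j Hj.
 change (dot d (col U j) (col U j) = 1). rewrite HU by auto. destruct (Nat.eq_dec j j); lia || auto. Qed.

Lemma resid_nonneg Om k A z : 0 <= residual Om k A z.
Proof. unfold residual, norm2. apply sqrt_pos. Qed.

Lemma part2 d k Ut x Om : in_colspan d k Ut x -> (forall i, In i Om -> (i < d)%nat) -> residual Om k Ut x = 0.
Proof. intros [c Hc] HOm. unfold residual. set (m := length Om).
 assert (Hz : in_colspan m k (rows_sel Om Ut) (sel Om x)).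
 { exists c. intros j Hj. unfold sel, rows_sel. apply Hc. apply HOm. apply nth_In. auto. }
 unfold norm2. rewrite <- sqrt_0. f_equal. unfold dot. rewrite (sumR_ext m _ (fun _ => 0)). apply sumR_zero.
 intros j Hj. rewrite proj_fix by auto. ring. Qed.

Lemma link d r k U Ut x Om : Forall (fun i => (i < d)%nat) Om -> ONf d r (col U) ->
  (forall j, (j < k)%nat -> in_colspan d r U (col Ut j)) -> in_colspan d r U x -> ~ in_colspan d k Ut x ->
  gU r U Om = 0%nat -> residual Om k Ut x > 0.
Proof. intros HOm HU HUt [a Ha] Hnot Hg.
 destruct (Rle_lt_or_eq_dec _ _ (resid_nonneg Om k Ut x)) as [Hpos|H0]; [lra|exfalso].
 revert H0. unfold residual. set (m := length Om). set (z := sel Om x). set (B := rows_sel Om Ut).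
 destruct (proj_spec m k B z) as [[c Hc] _]. set (p := proj m k B z) in *. intros H0.
 unfold norm2 in H0. symmetry in H0. apply sqrt_eq_0 in H0; [|apply dot_nonneg].
 assert (Hzp : forall j, (j < m)%nat -> z j - p j = 0) by (apply (sumR_sq0 m (fun j => z j - p j)); auto).
 set (beta := fun q => epsilon (inhabits (fun _ : nat => 0)) (fun bq => forall i, (i < d)%nat -> col Ut q i = sumR r (fun j => U i j * bq j))).
 assert (Hbeta : forall q, (q < k)%nat -> forall i, (i < d)%nat -> Ut i q = sumR r (fun j => U i j * beta q j)).
 { intros q Hq. unfold beta. apply epsilon_spec. apply HUt; auto. }
 assert (Hsw : forall i, (i < d)%nat -> sumR r (fun j => U i j * sumR k (fun q => c q * beta q j)) = sumR k (fun q => Ut i q * c q)).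
 { intros i Hi. rewrite (sumR_ext r _ (fun j => sumR k (fun q => c q * (U i j * beta q j)))).
   rewrite sumR_swap. apply sumR_ext. intros q Hq. rewrite sumR_scal, <- Hbeta by auto. ring.
   intros j Hj. rewrite <- sumR_scal. apply sumR_ext; intros; ring. }
 set (a' := fun j => a j - sumR k (fun q => c q * beta q j)).
 assert (HX : Xl r U Om a').
 { intros i Hin. destruct (In_nth Om i O Hin) as [j [Hj Hnth]].
   assert (Hid : (i < d)%nat) by (rewrite Forall_forall in HOm; auto).
   unfold a'. rewrite dot_minus_r. unfold dot, uU. rewrite Hsw by auto. rewrite <- Ha by auto.
   specialize (Hzp j Hj). unfold z, sel in Hzp. rewrite Hnth in Hzp. rewrite Hc in Hzp by auto.
   unfold B, rows_sel in Hzp. rewrite Hnth in Hzp. lra. }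
 assert (Ha0 := dim0_zero r (Xl r U Om) a' (Xl_subsp r U Om) Hg HX).
 apply Hnot. exists c. intros i Hi. rewrite Ha by auto. rewrite <- Hsw by auto.
 apply sumR_ext. intros j Hj. specialize (Ha0 j Hj). unfold a' in Ha0. f_equal. lra. Qed.
Theorem corollary1 (d r k : nat) (U Ut : mat) (x : vec) (mu0 delta : R) :
  orthonormal_cols d r U ->
  coherence d r U <= mu0 ->
  orthonormal_cols d k Ut ->
  (forall j, (j < k)%nat -> in_colspan d r U (col Ut j)) ->
  in_colspan d r U x ->
  0 < delta < 1 ->
  (~ in_colspan d k Ut x ->
   forall m : nat,
     32 * INR r * mu0 * (ln (2 * INR r / delta)) ^ 2 <= INR m ->
     prob d m (fun Om => residual Om k Ut x > 0) >= 1 - 4 * delta)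
  /\
  (in_colspan d k Ut x ->
   forall Om : list nat,
     (forall i, In i Om -> (i < d)%nat) ->
     invertible k (gram (length Om) k (rows_sel Om Ut)) ->
     residual Om k Ut x = 0).
Proof.
 intros HU Hcoh _ HUt Hx Hd.
 assert (HU' : ONf d r (col U)) by exact HU.
 split.
 2:{ intros Hin Om HOm _. apply (part2 d); auto. }
 intros Hnot m Hm.
 assert (Hr : (1 <= r)%nat).
 { destruct r. exfalso. apply Hnot. destruct Hx as [a Ha]. exists (fun _ => 0). intros i Hi.
   rewrite Ha by auto. simpl. rewrite (sumR_ext k _ (fun _ => 0)). rewrite sumR_zero. auto. intros; ring. lia. }
 assert (Hdp : (1 <= d)%nat).
 { destruct d. exfalso. specialize (HU' 0%nat 0%nat ltac:(lia) ltac:(lia)). simpl in HU'. unfold dot in HU'. simpl in HU'. lra. lia. }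
 assert (Hr0 : 0 < INR r) by (apply lt_0_INR; lia).
 assert (Hd0 : 0 < INR d) by (apply lt_0_INR; lia).
 assert (Hw : forall i, (i < d)%nat -> dot r (uU U i) (uU U i) <= mu0 * INR r / INR d).
 { intros i Hi. unfold coherence in Hcoh.
   assert (H1 := maxR_ge d (fun i => norm2 d (proj d r U (std_basis i)) ^ 2) i Hi). cbv beta in H1.
   rewrite proj_U_norm in H1 by auto.
   assert (INR d / INR r * dot r (uU U i) (uU U i) <= mu0).
   { eapply Rle_trans. 2: apply Hcoh. apply Rmult_le_compat_l. left; apply Rdiv_lt_0_compat; auto. auto. }
   apply Rmult_le_reg_l with (INR d / INR r). apply Rdiv_lt_0_compat; auto.
   replace (INR d / INR r * (mu0 * INR r / INR d)) with mu0 by (field; lra). auto. }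
 assert (Hmu : 1 <= mu0).
 { assert (INR r <= INR d * (mu0 * INR r / INR d)).
   { rewrite <- (sum_w d r U HU') at 1. rewrite <- sumR_const. apply sumR_le. intros; apply Hw; auto. }
   replace (INR d * (mu0 * INR r / INR d)) with (mu0 * INR r) in H by (field; lra). nra. }
 destruct (numeric r mu0 delta m Hr Hd Hmu Hm) as [HB Hsum].
 set (K := mu0 * INR r / INR d).
 assert (HK : 0 < K) by (apply Rdiv_lt_0_compat; auto; nra).
 assert (Hph := phase d (gU r U) (betaf mu0 r) (bfun mu0 r delta) (gU_mono r U)).
 assert (Hstep : forall l s, (1 <= s)%nat -> gU r U l = s -> sumR d (fun i => ind (s <= gU r U (i :: l))%nat) <= betaf mu0 r s * INR d).
 { intros l s Hs Hg. eapply Rle_trans. apply (gU_step d r U K l s); auto.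
   unfold betaf. rewrite Rmult_comm. eapply Rle_trans. 2: apply Rmult_le_compat_l. 2: lra. 2: apply Rmax_r.
   right. unfold K. field. split; lra. }
 assert (Hbpos : forall s, 0 <= betaf mu0 r s) by (intros; apply Rmax_l).
 assert (Hph2 : W d m (fun l => ind (1 <= gU r U (l ++ nil))%nat) <= INR d ^ m * (delta / 2)).
 { eapply Rle_trans. apply (Hph Hstep Hbpos r nil); auto.
   - unfold gU, dimX. apply best_le.
   - apply Rmult_le_compat_l; auto. apply pow_le; lra. }
 unfold prob. change (fold_right (fun l acc => (if excluded_middle_informative (residual l k Ut x > 0) then 1 else 0) + acc) 0 (all_lists d m))
   with (W d m (fun l => ind (residual l k Ut x > 0))).
 assert (Hlow : W d m (fun l => (-1) * ind (1 <= gU r U (l ++ nil))%nat + 1) <= W d m (fun l => ind (residual l k Ut x > 0))).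
 { apply W_le. intros l Hl. rewrite app_nil_r. unfold ind. destruct (excluded_middle_informative (residual l k Ut x > 0)).
   destruct excluded_middle_informative; lra.
   destruct excluded_middle_informative. lra. exfalso. apply n.
   apply (link d r k U Ut x l); auto. lia. }
 rewrite W_lin, W_const in Hlow.
 assert (Hdm : 0 < INR d ^ m) by (apply pow_lt; auto).
 apply Rle_ge. apply Rmult_le_reg_r with (INR d ^ m); auto. unfold Rdiv. rewrite Rmult_assoc, Rinv_l by lra. nra. Qed.
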